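(* Let $\kappa$ be an uncountable cardinal, let $X$ be a set of cardinality at least $\kappa$, let $\Gamma$ be the group of all permutations of $X$ acting by application, and let $I_\kappa$ be the ideal of subsets of $X$ of cardinality less than $\kappa$. Then $\Gamma\curvearrowright X, I_\kappa$ is a simple dynamical ideal.
   Context: For a group $\Gamma$ acting on $X$ and $a\subseteq X$, $\mathrm{pstab}(a)=\{\gamma\in\Gamma:\gamma\cdot x=x\ \forall x\in a\}$. A dynamical ideal $\Gamma\curvearrowright X, I$ (a $\Gamma$-invariant ideal containing all singletons) is simple if for all $a\subseteq b$ in $I$, the only normal subgroup of $\mathrm{pstab}(a)$ containing $\mathrm{pstab}(b)$ is $\mathrm{pstab}(a)$ itself. *)

(* Defs.v *)
From HB Require Import structures.
From mathcomp Require Import all_boot all_order all_algebra.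
From mathcomp Require Import all_classical.
Set Implicit Arguments. Unset Strict Implicit. Unset Printing Implicit Defensive.
Local Open Scope classical_set_scope.
Local Open Scope card_scope.

Definition card_lt (T U : Type) (A : set T) (B : set U) : Prop :=
  (A #<= B) /\ ~ (B #<= A).

Definition Sym (X : Type) : set (X -> X) := [set f | bijective f].
Arguments Sym X : clear implicits.

Definition perm_subgroup (X : Type) (G : set (X -> X)) : Prop :=
  [/\ G `<=` Sym X, G id,
      (forall f g, G f -> G g -> G (f \o g)) &
      (forall f h, G f -> cancel f h -> cancel h f -> G h)].

Definition normal_subgroup (X : Type) (N G : set (X -> X)) : Prop :=
  [/\ N `<=` G, perm_subgroup N &
      (forall g h n, G g -> cancel g h -> cancel h g -> N n ->
         N (g \o n \o h))].

Definition pstab (X : Type) (Gamma : set (X -> X)) (a : set X) : set (X -> X) :=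
  [set g | Gamma g /\ forall x, a x -> g x = x].

Definition is_ideal (X : Type) (I : set (set X)) : Prop :=
  [/\ I set0, ~ I setT,
      (forall a b, I b -> a `<=` b -> I a) &
      (forall a b, I a -> I b -> I (a `|` b))].

Definition dynamical_ideal (X : Type) (Gamma : set (X -> X)) (I : set (set X))
  : Prop :=
  [/\ is_ideal I,
      (forall g a, Gamma g -> I a -> I (g @` a)) &
      (forall x, I [set x])].

Definition simple_dynamical_ideal (X : Type) (Gamma : set (X -> X))
  (I : set (set X)) : Prop :=
  dynamical_ideal Gamma I /\
  forall a b, I a -> I b -> a `<=` b ->
    forall N, normal_subgroup N (pstab Gamma a) ->
      pstab Gamma b `<=` N -> N = pstab Gamma a.

(** I_kappa : subsets of X of cardinality < |K| (kappa = |K|). *)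
Definition I_card (X K : Type) : set (set X) :=
  [set a | card_lt a [set: K]].
Arguments I_card X K : clear implicits.

(* Main.v *)
Require Import Defs.
From HB Require Import structures.
From mathcomp Require Import all_boot all_order all_algebra.
From mathcomp Require Import all_classical.
From Stdlib Require Import ClassicalEpsilon.
Local Open Scope classical_set_scope.
Local Open Scope card_scope.
Set Implicit Arguments. Unset Strict Implicit.
From mathcomp Require Import zify.
From Stdlib Require Import ClassicalEpsilon Classical.

Definition cle {T U : Type} (A : set T) (B : set U) :=
  exists f : T -> U, (forall x, A x -> B (f x)) /\
    (forall x y, A x -> A y -> f x = f y -> x = y).

Lemma le_card T U (A : set T) (B : set U) : cle A B -> A #<= B.
Proof.
move=> [f [fAB finj]].
have : $|{injfun A >-> B}|.
  apply/injfunPex; exists f => //. move=> x y; rewrite !inE; exact: finj.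
by case=> h; exact: inj_card_le h.
Qed.

Lemma card_le_le T U (A : set T) (B : set U) (u0 : U) : A #<= B -> cle A B.
Proof.
move=> /card_leP [h].
exists (fun x => match pselect (A x) with left Ax => val (h (exist _ x (mem_set Ax))) | right _ => u0 end).
split.
- move=> x Ax; case: pselect => // Ax'.
  exact: set_mem (valP (h (exist _ x (mem_set Ax')))).
- move=> x y Ax Ay; case: (pselect (A x)) => [Ax'|//]; case: (pselect (A y)) => [Ay'|//].
  move=> /val_inj /(@inj _ _ _ h _ _ (in_setT _) (in_setT _)).
  by case.
Qed.
Arguments card_le_le {T U A B}.
Arguments le_card {T U A B}.

Lemma cle_trans T U V (A : set T) (B : set U) (C : set V) :
  cle A B -> cle B C -> cle A C.
Proof.
move=> [f [fm fi]] [g [gm gi]]; exists (g \o f); split.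
- by move=> x Ax; apply: gm; apply: fm.
- by move=> x y Ax Ay /= /gi E; apply: fi => //; apply: E; apply: fm.
Qed.

Lemma cle_sub T (A B : set T) : A `<=` B -> cle A B.
Proof. by move=> AB; exists id; split. Qed.

Lemma cle_total T (t0 : T) (A B : set T) : cle A B \/ cle B A.
Proof.
pose P (G : set (T * T)) :=
  [/\ (forall p, G p -> A p.1 /\ B p.2),
      (forall x y y', G (x, y) -> G (x, y') -> y = y') &
      (forall x x' y, G (x, y) -> G (x', y) -> x = x')].
have [M [[M1 M2 M3] Mmax]] : exists M, P M /\ forall B', M `<` B' -> ~ P B'.
  apply: Zorn_bigcup => F FP Ftot; split.
  - by move=> p [G FG Gp]; have [+ _ _] := FP G FG; apply.
  - move=> x y y' [G1 F1 G1p] [G2 F2 G2p].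
    have [H|H] := Ftot _ _ F1 F2.
    + by case: (FP _ F2) => _ H2 _; apply: H2 (H _ G1p) G2p.
    + by case: (FP _ F1) => _ H2 _; apply: H2 G1p (H _ G2p).
  - move=> x x' y [G1 F1 G1p] [G2 F2 G2p].
    have [H|H] := Ftot _ _ F1 F2.
    + by case: (FP _ F2) => _ _ H2; apply: H2 (H _ G1p) G2p.
    + by case: (FP _ F1) => _ _ H2; apply: H2 G1p (H _ G2p).
have [Hd|Hd] := pselect (forall x, A x -> exists y, M (x, y)).
  left; exists (fun x => epsilon (inhabits t0) (fun y => M (x, y))); split.
  - by move=> x Ax; have := epsilon_spec (inhabits t0) _ (Hd x Ax) => /M1 [].
  - move=> x y Ax Ay E; have := epsilon_spec (inhabits t0) _ (Hd x Ax).
    rewrite E => Hx; have := epsilon_spec (inhabits t0) _ (Hd y Ay).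
    exact: M3.
have [Hr|Hr] := pselect (forall y, B y -> exists x, M (x, y)).
  right; exists (fun y => epsilon (inhabits t0) (fun x => M (x, y))); split.
  - by move=> x Ax; have := epsilon_spec (inhabits t0) _ (Hr x Ax) => /M1 [].
  - move=> x y Ax Ay E; have := epsilon_spec (inhabits t0) _ (Hr x Ax).
    rewrite E => Hx; have := epsilon_spec (inhabits t0) _ (Hr y Ay).
    exact: M2.
exfalso.
move/existsNP: Hd => [x /not_implyP [Ax /forallNP Hx]].
move/existsNP: Hr => [y /not_implyP [By /forallNP Hy]].
apply: (Mmax (M `|` [set (x, y)])).
  split; first by move=> p Mp; left.
  move=> /(_ (x, y) (or_intror erefl)); exact: Hx.
split.
- by move=> p [/M1//|-> /=].
- move=> u v v' [Mv|[E1 E2]] [Mv'|[E3 E4]]; subst => //.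
  + exact: M2 Mv Mv'.
  + by exfalso; apply: (Hx v).
  + by exfalso; apply: (Hx v').
- move=> u u' v [Mv|[E1 E2]] [Mv'|[E3 E4]]; subst => //.
  + exact: M3 Mv Mv'.
  + by exfalso; apply: (Hy u).
  + by exfalso; apply: (Hy u').
Qed.

Lemma cle_absorb T (S C : set T) :
  cle [set: nat] S -> cle C [set: nat] -> cle (S `|` C) S.
Proof.
move=> [i [im ii]] [c [_ ci]].
have i_inj : forall n m, i n = i m -> n = m by move=> n m; apply: ii.
pose inv x := epsilon (inhabits 0%N) (fun n => i n = x).
have invP : forall x, (exists n, i n = x) -> i (inv x) = x.
  by move=> x H; exact: (epsilon_spec (inhabits 0%N) _ H).
exists (fun x => if pselect (exists n, i n = x) then i (2 * inv x)%N
  else if pselect (S x) then x else i (2 * c x + 1)%N); split.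
  move=> x Hx; case: (pselect (exists n, i n = x)) => [H1|H1]; first exact: im.
  by case: (pselect (S x)) => // H2; exact: im.
move=> x y Sx Sy.
case: (pselect (exists n, i n = x)) => [Rx|Rx];
case: (pselect (exists n, i n = y)) => [Ry|Ry].
- by move/i_inj => E; rewrite -(invP _ Rx) -(invP _ Ry); congr i; lia.
- case: (pselect (S y)) => [H3 E|H3 /i_inj]; last by lia.
  by exfalso; apply Ry; exists (2 * inv x)%N.
- case: (pselect (S x)) => [H3 E|H3 /i_inj]; last by lia.
  by exfalso; apply Rx; exists (2 * inv y)%N.
- case: (pselect (S x)) => [Sx'|Sx']; case: (pselect (S y)) => [Sy'|Sy'] //.
  + by move=> E; exfalso; apply Rx; exists (2 * c y + 1)%N.
  + by move=> E; exfalso; apply Ry; exists (2 * c x + 1)%N.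
  + move/i_inj => E; apply: ci; [by case: Sx|by case: Sy|lia].
Qed.

Lemma cle_double T (t0 : T) (A : set T) :
  infinite_set A -> cle [set p : T * bool | A p.1] A.
Proof.
move=> Ainf.
pose P (G : set ((T * bool) * T)) :=
  [/\ (forall x b y, G ((x, b), y) -> A x /\ A y),
      (forall p y y', G (p, y) -> G (p, y') -> y = y'),
      (forall p p' y, G (p, y) -> G (p', y) -> p = p'),
      (forall x b y, G ((x, b), y) -> exists y', G ((x, ~~ b), y')) &
      (forall p y, G (p, y) -> exists y', G ((y, false), y'))].
have [M [[M1 M2 M3 M4 M5] Mmax]] : exists M, P M /\ forall B', M `<` B' -> ~ P B'.
  apply: Zorn_bigcup => F FP Ftot; split.
  - by move=> x b y [G FG Gp]; have [H _ _ _ _] := FP G FG; exact: H Gp.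
  - move=> p y y' [G1 F1 G1p] [G2 F2 G2p].
    have [H|H] := Ftot _ _ F1 F2.
    + by case: (FP _ F2) => _ H2 _ _ _; apply: H2 (H _ G1p) G2p.
    + by case: (FP _ F1) => _ H2 _ _ _; apply: H2 G1p (H _ G2p).
  - move=> p p' y [G1 F1 G1p] [G2 F2 G2p].
    have [H|H] := Ftot _ _ F1 F2.
    + by case: (FP _ F2) => _ _ H2 _ _; apply: H2 (H _ G1p) G2p.
    + by case: (FP _ F1) => _ _ H2 _ _; apply: H2 G1p (H _ G2p).
  - move=> x b y [G FG Gp]; have [_ _ _ + _] := FP G FG.
    by move=> /(_ _ _ _ Gp) [y' Gy']; exists y'; exists G.
  - move=> p y [G FG Gp]; have [_ _ _ _ +] := FP G FG.
    by move=> /(_ _ _ Gp) [y' Gy']; exists y'; exists G.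
pose S := [set x | exists y, M ((x, false), y)].
have domS : forall x b y, M ((x, b), y) -> S x.
  move=> x [] y Mxy; last by exists y.
  by have [y' ?] := M4 _ _ _ Mxy; exists y'.
have SA : S `<=` A by move=> x [y /M1 []].
have finD : finite_set (A `\` S).
  apply/finite_setPn => /(card_le_le t0) [i [im ii]].
  have i_inj : forall n m, i n = i m -> n = m by move=> n m; apply: ii.
  apply: (Mmax (M `|` [set q | exists n (b : bool), q = ((i n, b), i (2 * n + b)%N)])).
    split; first by move=> q Mq; left.
    move=> /(_ ((i 0%N, false), i 0%N)) H.
    have Mq : M ((i 0%N, false), i 0%N) by apply: H; right; exists 0%N, false.
    by case: (im 0%N I) => _; apply; exact: domS Mq.
  split.
  - move=> x b y [/M1 //|[n [b' [E1 E2 E3]]]]; subst.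
    by split; [case: (im n I)|case: (im (2 * n + b')%N I)].
  - move=> p y y' [My|[n [b [E1 E2]]]] [My'|[n' [b' [E3 E4]]]].
    + exact: M2 My My'.
    + by exfalso; subst; case: (im n' I) => _; apply; exact: domS My.
    + by exfalso; subst; case: (im n I) => _; apply; exact: domS My'.
    + move: E1 E2 E3 E4 => -> -> [/i_inj <- <-] ->; done.
  - move=> p p' y [My|[n [b [E1 E2]]]] [My'|[n' [b' [E3 E4]]]].
    + exact: M3 My My'.
    + exfalso; subst; have [y2 My2] := M5 _ _ My.
      by case: (im (2 * n' + b')%N I) => _; apply; exists y2.
    + exfalso; subst; have [y2 My2] := M5 _ _ My'.
      by case: (im (2 * n + b)%N I) => _; apply; exists y2.
    + subst; move: E4 => /i_inj E.
      have Eb : b = b' by move: E; case: b; case: b' => //=; lia.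
      subst; have -> : n = n' by lia.
      done.
  - move=> x b y [/M4 [y' My']|[n [b' [[-> <-] _]]]]; first by exists y'; left.
    by exists (i (2 * n + ~~ b)%N); right; exists n, (~~ b).
  - move=> p y [/M5 [y' My']|[n [b' [_ ->]]]]; first by exists y'; left.
    by exists (i (2 * (2 * n + b'))%N); right; exists (2 * n + b')%N, false; rewrite addn0.
have Sinf : infinite_set S.
  move=> finS; apply: Ainf.
  have -> : A = S `|` (A `\` S).
    by apply/seteqP; split => x; [move=> Ax; case: (pselect (S x)); [left|right]|case=> [/SA|[]]].
  by rewrite finite_setU.
have [h [hm hi]] : cle (S `|` (A `\` S)) S.
  apply: cle_absorb; first exact: (card_le_le t0 (proj1 (infiniteP _) Sinf)).
  exact: (card_le_le 0%N (finite_set_countable finD)).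
have hA : forall x, A x -> (S `|` (A `\` S)) x.
  by move=> x Ax; case: (pselect (S x)); [left|right].
have ex : forall x (b : bool), A x -> exists y, M ((h x, b), y).
  move=> x b Ax; have [y My] := hm x (hA x Ax).
  case: b; last by exists y.
  by have [y' ?] := M4 _ _ _ My; exists y'.
exists (fun p => epsilon (inhabits t0) (fun y => M ((h p.1, p.2), y))); split.
  move=> [x b] /= Ax; have := epsilon_spec (inhabits t0) _ (ex x b Ax).
  by move/M1 => [].
move=> [x b] [x' b'] /= Ax Ax' E.
have := epsilon_spec (inhabits t0) _ (ex x b Ax); rewrite E => H1.
have := epsilon_spec (inhabits t0) _ (ex x' b' Ax') => /(M3 _ _ _ H1) [E1 ->].
by rewrite (hi _ _ (hA _ Ax) (hA _ Ax') E1).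
Qed.

Section Small.
Variables (K X : Type) (k0 : K) (x0 : X).
Hypothesis Kinf : infinite_set [set: K].
Hypothesis XK : cle [set: K] [set: X].

Definition small (A : set X) := cle A [set: K] /\ ~ cle [set: K] A.

Lemma small_le (A B : set X) : cle A B -> small B -> small A.
Proof.
move=> AB [BK nKB]; split; first exact: cle_trans AB BK.
by move=> KA; apply: nKB; exact: cle_trans KA AB.
Qed.

Lemma small_fin (A : set X) : finite_set A -> small A.
Proof.
move=> finA; split.
  apply: cle_trans (card_le_le 0%N (finite_set_countable finA)) _.
  exact: (card_le_le k0 (proj1 (infiniteP _) Kinf)).
move=> /le_card KA; apply: Kinf; exact: card_le_finite KA finA.
Qed.

Lemma small_U_aux (A B : set X) : cle B A -> small A -> small (A `|` B).
Proof.
move=> BA sA.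
have [finA|infA] := pselect (finite_set A).
  apply: small_fin; rewrite finite_setU; split => //.
  exact: card_le_finite (le_card BA) finA.
apply: small_le sA; apply: cle_trans (cle_double x0 infA).
case: BA => j [jm ji].
exists (fun x => if pselect (A x) then (x, true) else (j x, false)); split.
  move=> x ABx; case: (pselect (A x)) => [//|nAx] /=.
  by apply: jm; case: ABx.
move=> x y ABx ABy; case: (pselect (A x)) => [Ax|nAx]; case: (pselect (A y)) => [Ay|nAy];
  move=> /= [] //.
move=> E; apply: ji E; [by case: ABx|by case: ABy].
Qed.

Lemma small_U (A B : set X) : small A -> small B -> small (A `|` B).
Proof.
move=> sA sB; have [AB|BA] := cle_total x0 A B.
  by rewrite setUC; exact: small_U_aux.
exact: small_U_aux.
Qed.

Lemma small_image (f : X -> X) (A : set X) : small A -> small (f @` A).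
Proof. by apply: small_le; exact: (card_le_le x0 (card_image_le f A)). Qed.

Lemma small_setT : ~ small [set: X].
Proof. by case=> _; apply. Qed.

Lemma room (c T : set X) : small c -> small T ->
  exists e : X -> X, (forall x y, c x -> c y -> e x = e y -> x = y) /\
     (forall x, c x -> ~ T (e x)).
Proof.
move=> sc sT; have [[e [em ei]]|cT] := cle_total x0 c (~` T).
  by exists e; split => // x /em.
exfalso; apply: small_setT.
have sCT : small (~` T) by exact: small_le cT sc.
by rewrite -(setUv T); exact: small_U.
Qed.

End Small.

Definition swap {X : Type} (D : set X) (f : X -> X) (x : X) : X :=
  if pselect (D x) then f x else
  if pselect (exists2 y, D y & f y = x)
  then epsilon (inhabits x) (fun y => D y /\ f y = x) else x.

Section Swap.
Variables (X : Type) (D : set X) (f : X -> X).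
Hypothesis finj : forall x y, D x -> D y -> f x = f y -> x = y.
Hypothesis fdisj : forall x, D x -> ~ D (f x).

Lemma swap_in x : D x -> swap D f x = f x.
Proof. by rewrite /swap; case: (pselect (D x)). Qed.

Lemma swap_img x : D x -> swap D f (f x) = x.
Proof.
move=> Dx; rewrite /swap; case: (pselect (D (f x))) => [H0|nH0] /=; first by case: (fdisj Dx H0).
case: (pselect (exists2 y, D y & f y = f x)) => [H|nH] /=; last by case: nH; exists x.
have [Dy fy] : D (epsilon (inhabits (f x)) (fun y => D y /\ f y = f x)) /\
   f (epsilon (inhabits (f x)) (fun y => D y /\ f y = f x)) = f x.
  by apply: (epsilon_spec (inhabits (f x)) (fun y => D y /\ f y = f x)); case: H => y ? ?; exists y.
exact: finj.
Qed.

Lemma swap_out x : ~ D x -> ~ (exists2 y, D y & f y = x) -> swap D f x = x.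
Proof.
move=> nD nE; rewrite /swap; case: (pselect (D x)) => // nD' /=.
by case: (pselect (exists2 y, D y & f y = x)).
Qed.

Lemma swap_invol x : swap D f (swap D f x) = x.
Proof.
have [Dx|nDx] := pselect (D x); first by rewrite (swap_in Dx) swap_img.
have [[y Dy <-]|nE] := pselect (exists2 y, D y & f y = x).
  by rewrite swap_img // swap_in.
by rewrite !swap_out.
Qed.

Lemma swap_bij : bijective (swap D f).
Proof. by exists (swap D f) => x; exact: swap_invol. Qed.

End Swap.
Section Main.
Variables (K X : Type).
Hypothesis K_uncountable : ~ countable [set: K].
Hypothesis X_large : [set: K] #<= [set: X].

Lemma K_inhab : inhabited K.
Proof.
apply: NNPP => hne; apply: K_uncountable.
have -> : [set: K] = set0.
  by apply/seteqP; split=> x // _; exfalso; apply: hne; exact: inhabits x.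
exact: countable0.
Qed.
End Main.

Theorem mainTheorem16 (K X : Type)
  (K_uncountable : ~ countable [set: K])
  (X_large : [set: K] #<= [set: X]) :
  simple_dynamical_ideal (Sym X) (I_card X K).
Proof.
have [k0] := K_inhab K_uncountable.
have Kinf : infinite_set [set: K] by move=> /finite_set_countable.
have [x0] : inhabited X.
  case/card_leP: X_large => h.
  exact: inhabits (val (h (exist _ k0 (mem_set (I : [set: K] k0))))).
have XK : cle [set: K] [set: X] := card_le_le x0 X_large.
have smallP : forall a, I_card X K a <-> small K a.
  move=> a; split.
  - by case=> aK nKa; split; [exact: card_le_le k0 aK|move=> /le_card].
  - by case=> aK nKa; split; [exact: le_card aK|move=> /(card_le_le x0)].
have sF := small_fin k0 Kinf.
have sU := small_U k0 x0 Kinf.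
have sI := small_image (K:=K) x0.
have sL := @small_le K X.
have sT := small_setT XK.
have sR := room k0 x0 Kinf XK.
split.
  split.
  - split.
    + by apply/smallP; apply: sF; exact: finite_set0.
    + by move=> /smallP.
    + by move=> a b /smallP sb ab; apply/smallP; apply: sL sb; exact: cle_sub.
    + by move=> a b /smallP sa /smallP sb; apply/smallP; exact: sU.
  - by move=> g a _ /smallP sa; apply/smallP; exact: sI.
  - by move=> x; apply/smallP; apply: sF; exact: finite_set1.
move=> a b /smallP sa /smallP sb ab N [NP [_ _ Ncomp _] Nconj] Hb.
apply/seteqP; split => // g [gbij ga].
pose c := b `\` a.
have cb : c `<=` b by move=> x [].
have sc : small K c by apply: sL sb; exact: cle_sub.
have conjN : forall e', (forall x y, c x -> c y -> e' x = e' y -> x = y) ->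
   (forall x, c x -> ~ b (e' x)) ->
   forall k, bijective k -> (forall x, a x -> k x = x) ->
   (forall x, c x -> k (e' x) = e' x) -> N k.
  move=> e' ei eb k kbij ka ke.
  have edisj : forall x, c x -> ~ c (e' x) by move=> x cx /cb; exact: eb.
  pose s := swap c e'.
  have sa' : forall x, a x -> s x = x.
    move=> x ax; apply: swap_out => //; first by case.
    by case=> y cy E; apply: (eb y cy); rewrite E; exact: ab.
  have sbij : bijective s := swap_bij ei edisj.
  have sinv : forall x, s (s x) = x := swap_invol ei edisj.
  have Nk' : N (s \o k \o s).
    apply: Hb; split; first by apply: bij_comp => //; apply: bij_comp.
    move=> x bx /=; have [ax|nax] := pselect (a x).
      by rewrite (sa' x ax) (ka x ax) (sa' x ax).
    have cx : c x by split.
    by rewrite /s (swap_in _ cx) ke // (swap_img ei edisj cx).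
  have := Nconj s s _ (conj sbij sa') sinv sinv Nk'.
  by congr N; apply/funext => x /=; rewrite !sinv.
case: gbij => ginv gK Kg.
have ginj : injective g := can_inj gK.
pose T1 := b `|` g @` b.
have sT1 : small K T1 by apply: sU => //; exact: sI.
have [e [ei eT1]] := sR c T1 sc sT1.
pose T2 := T1 `|` e @` c.
have sT2 : small K T2 by apply: sU => //; exact: sI.
have [e' [e'i e'T2]] := sR c T2 sc sT2.
have e'b : forall x, c x -> ~ b (e' x).
  by move=> x cx bx; apply: (e'T2 x cx); left; left.
have edisj : forall x, c x -> ~ c (e x).
  by move=> x cx /cb bx; apply: (eT1 x cx); left.
pose s1 := swap c e.
pose D2 := g @` c.
pose f2 := e \o ginv.
have f2i : forall x y, D2 x -> D2 y -> f2 x = f2 y -> x = y.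
  move=> _ _ [x cx <-] [y cy <-]; rewrite /f2 /= !gK => E.
  by rewrite (ei x y cx cy E).
have f2d : forall x, D2 x -> ~ D2 (f2 x).
  move=> _ [x cx <-]; rewrite /f2 /= gK => -[y cy E].
  by apply: (eT1 x cx); right; exists y => //; exact: cb.
pose s2 := swap D2 f2.
have s1a : forall x, a x -> s1 x = x.
  move=> x ax; apply: swap_out => //; first by case.
  by case=> y cy E; apply: (eT1 y cy); left; rewrite E; exact: ab.
have s2a : forall x, a x -> s2 x = x.
  move=> x ax; apply: swap_out => //.
  - case=> y cy E; have : g y = g x by rewrite E ga.
    by move/ginj => yx; case: cy; rewrite yx.
  - case=> _ [y cy <-]; rewrite /f2 /= gK => E.
    by apply: (eT1 y cy); left; rewrite E; exact: ab.
have s1e' : forall x, c x -> s1 (e' x) = e' x.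
  move=> x cx; apply: swap_out => //.
  - by move=> ce; apply: (e'b x cx); exact: cb.
  - by case=> y cy E; apply: (e'T2 x cx); right; exists y.
have s2e' : forall x, c x -> s2 (e' x) = e' x.
  move=> x cx; apply: swap_out => //.
  - by case=> y cy E; apply: (e'T2 x cx); left; right; exists y => //; exact: cb.
  - case=> _ [y cy <-]; rewrite /f2 /= gK => E.
    by apply: (e'T2 x cx); right; exists y.
have s1bij := swap_bij ei edisj.
have s1inv := swap_invol ei edisj.
have s2bij := swap_bij f2i f2d.
have s2inv := swap_invol f2i f2d.
have N1 : N s1 := conjN e' e'i e'b s1 s1bij s1a s1e'.
have N2 : N s2 := conjN e' e'i e'b s2 s2bij s2a s2e'.
have Nk : N (s1 \o s2 \o g).
  apply: Hb; split.
    by apply: bij_comp; [apply: bij_comp|exists ginv].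
  move=> x bx /=; have [ax|nax] := pselect (a x).
    by rewrite (ga x ax) (s2a x ax) (s1a x ax).
  have cx : c x by split.
  have Dgx : D2 (g x) by exists x.
  rewrite /s2 (swap_in _ Dgx) /f2 /= gK.
  by rewrite /s1 (swap_img ei edisj cx).
have -> : g = s2 \o s1 \o (s1 \o s2 \o g).
  by apply/funext => x /=; rewrite /s1 /s2 s1inv s2inv.

by apply: (Ncomp) => //; apply: (Ncomp).
Qed.
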